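(* Let $d\ge 1$ and $N\ge 1$, and let $(X_1,Y_1),\dots,(X_N,Y_N),(X_{test},Y_{test})$ be i.i.d. random variables with values in $\mathbb{R}^d\times\mathbb{R}$ and common (unknown) distribution $P_{XY}$. Let $f:\mathbb{R}^d\to\mathbb{R}$ be a fixed point-prediction model (intended as an approximation of $\mathrm{E}(Y\mid X)$), and set $A_n=(f(X_n)-Y_n)^2$ for $n=1,\dots,N$ and $A_{test}=(f(X_{test})-Y_{test})^2$. Let $\{\phi_x:\mathbb{R}_+\to\mathcal{B}_x\}_{x\in\mathbb{R}^d}$ be a family of differentiable functions such that (i) $\phi_x'(a)>0$ for all $x\in\mathbb{R}^d$ and all $a\in\mathbb{R}_+$, and (ii) $\mathcal{B}_x=\phi_x(\mathbb{R}_+)$ is the same set for all $x\in\mathbb{R}^d$. Let $B_n=\phi_{X_n}(A_n)$, $n=1,\dots,N$, and assume $B_n\neq B_{n'}$ whenever $n\neq n'$. Then there is a permutation $(m_1,\dots,m_N)$ of $\{1,\dots,N\}$ with $B_{m_1}<\dots<B_{m_N}$, and for every $\alpha\in[\frac{1}{N+1},1)$, setting $k=\lceil (N+1)(1-\alpha)\rceil$ (so $1\le k\le N$), the interval $$C=[f(X_{test})-\Delta,\ f(X_{test})+\Delta],\qquad \Delta=\sqrt{\phi_{X_{test}}^{-1}\big(B_{m_k}\big)},$$ where $\phi_{X_{test}}^{-1}:\mathcal{B}_{X_{test}}\to\mathbb{R}_+$ is the inverse of $\phi_{X_{test}}$, satisfies $$\mathrm{Prob}\big(Y_{test}\in C\big)\ge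 1-\alpha .$$
   Context: $\mathbb{R}_+=[0,\infty)$ denotes the set of possible values of the base conformity score $a(f(X),Y)=(f(X)-Y)^2$. The functions $\phi_x$ are attribute-dependent transformations of this conformity score; $B_n=\phi_{X_n}(A_n)$ are the transformed conformity scores of the calibration samples, and $B_{m_k}$ is the $k$-th smallest of them. ''Marginally valid with confidence $1-\alpha$'' means $\mathrm{Prob}(Y_{test}\in C)\ge 1-\alpha$, the probability being over all $N+1$ samples jointly. *)

(* Defs.v *)
From HB Require Import structures.
From mathcomp Require Import all_boot all_order all_algebra.
From mathcomp Require Import all_classical all_reals all_analysis.
Set Implicit Arguments. Unset Strict Implicit. Unset Printing Implicit Defensive.
Import Order.TTheory GRing.Theory Num.Theory.
Import numFieldNormedType.Exports.
Local Open Scope classical_set_scope.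
Local Open Scope ring_scope.

Definition iid_family {dT dS : measure_display} {R : realType}
  {T : measurableType dT} {S : measurableType dS} (P : probability T R)
  {I : finType} (Z : I -> T -> S) : Prop :=
  [/\ (forall i, measurable_fun setT (Z i)),
      (* mutual independence: product rule for every choice of events
         (subfamilies are obtained by taking E i = setT) *)
      (forall E : I -> set S, (forall i, measurable (E i)) ->
         P (\bigcap_(i in [set: I]) (Z i @^-1` E i)) =
         (\prod_(i : I) P (Z i @^-1` E i))%E) &
      (forall i j (B : set S), measurable B ->
         P (Z i @^-1` B) = P (Z j @^-1` B))].

(* g has a (one-sided at the boundary 0) derivative on R_+ = [0,oo) which is
   strictly positive everywhere on R_+: the derivative of the restriction of
   g to R_+. *)
Definition pos_deriv_on_Rplus {R : realType} (g : R -> R) : Prop :=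
  forall a : R, 0 <= a -> exists l : R, 0 < l /\
    (fun h : R => h^-1 * (g (a + h) - g a)) @
       within [set h : R | 0 <= a + h] (0 : R)^' --> l.

(* Inverse of g restricted to R_+: the (chosen) a >= 0 with g a = b. When g is
   injective on R_+ and b lies in g(R_+) this is the unique such a. *)
Definition inv_Rplus {R : realType} (g : R -> R) (b : R) : R :=
  xget 0 [set a : R | 0 <= a /\ g a = b].

(* Main.v *)
Require Import Defs.
From HB Require Import structures.
From mathcomp Require Import all_boot all_order all_algebra.
From mathcomp Require Import all_classical all_reals all_analysis.
From mathcomp Require Import fingroup perm.
From mathcomp Require Import zify ring lra.
Set Implicit Arguments. Unset Strict Implicit. Unset Printing Implicit Defensive.
Import Order.TTheory GRing.Theory Num.Theory.
Import numFieldNormedType.Exports.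
Local Open Scope classical_set_scope.
Local Open Scope ring_scope.

Lemma deriv_sign (R : realType) (g : R -> R) (a l : R) : 0 < l ->
  (fun h : R => h^-1 * (g (a + h) - g a)) @ within [set h : R | 0 <= a + h] (0 : R)^' --> l ->
  exists e : R, 0 < e /\ forall h, h != 0 -> `|h| < e -> 0 <= a + h -> 0 < h^-1 * (g (a+h) - g a).
Proof.
move=> l0 H.
have := @cvgr_gt _ _ _ _ _ _ H 0 l0.
move=> /(_ (within_filter _ _)).
rewrite /nbhs /= /dnbhs /within /=.
move=> /nbhs_ballP [e e0 He].
exists e; split => // h h0 he ah.
apply: He => //; by rewrite /ball /= sub0r normrN.

Qed.
Lemma small_pos (R : realType) (p q : R) : 0 < p -> 0 < q -> exists r, 0 < r /\ r < p /\ r < q.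
Proof. move=> p0 q0; case: (leP p q) => pq; [exists (p/2) | exists (q/2)]; lra. Qed.

Lemma strict_incr (R : realType) (g : R -> R) : pos_deriv_on_Rplus g ->
  forall a b, 0 <= a -> a < b -> g a < g b.
Proof.
move=> Hg a b a0 ab.
have Dg x : 0 <= x -> exists e : R, 0 < e /\ forall h, h != 0 -> `|h| < e -> 0 <= x + h ->
    0 < h^-1 * (g (x+h) - g x).
  by move=> x0; have [l [l0 Hl]] := Hg x x0; exact: deriv_sign l0 Hl.
pose S := [set x | a <= x <= b /\ forall y, a < y -> y <= x -> g a < g y].
have Sa : S a by split; [rewrite lexx ltW | move=> y ay ya; lra].
have hS : has_sup S by split; [exists a | exists b => x [/andP[]]].
set s := sup S.
have as_ : a <= s by exact: sup_upper_bound.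
have sb : s <= b by apply: ge_sup; [exists a | move=> x [/andP[]]].
have P y : a < y -> y < s -> g a < g y.
  move=> ay ys; have [x [_ Sx] yx] := sup_gt (ex_intro _ a Sa) ys.
  by apply: Sx => //; exact: ltW.
have [e [e0 He]] := Dg s (le_trans a0 as_).
have Q : g a <= g s /\ forall y, a < y -> y <= s -> g a < g y.
  case: (eqVneq a s) => [<-|nas].
    by split => // y ay ya; lra.
  have ass : a < s by rewrite lt_neqAle nas.
  have sa0 : 0 < s - a by rewrite subr_gt0.
  have [r [r0 [re rs]]] := small_pos e0 sa0.
  have gs : g a < g s.
    have := He (- r); rewrite oppr_eq0 normrN gtr0_norm // (gt_eqF r0) => /(_ isT re).
    have h1 : 0 <= s + - r by lra.
    move=> /(_ h1) H1.
    have H2 : g (s - r) < g s.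
      move: H1; rewrite invrN mulNr oppr_gt0 pmulr_rlt0 ?invr_gt0 //; lra.
    have := P (s - r); lra.
  split; first exact: ltW.
  move=> y ay ys; case: (ltP y s) => [/(P _ ay)//|sy].
  by have -> : y = s by apply/le_anti; rewrite ys sy.
case: (ltP s b) => [sb'|bs]; last first.
  have -> : b = s by apply/le_anti; rewrite sb bs.
  by apply: Q.2 => //; rewrite (lt_le_trans ab).
exfalso.
have sa0 : 0 < b - s by rewrite subr_gt0.
have [r [r0 [re rs]]] := small_pos e0 sa0.
have Sx : S (s + r).
  split; first by apply/andP; split; lra.
  move=> y ay ysr; case: (leP y s) => [ys|sy]; first exact: Q.2.
  have := He (y - s); rewrite subr_eq0 (gt_eqF sy) gtr0_norm ?subr_gt0 //.
  have h1 : y - s < e by lra.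
  have h2 : 0 <= s + (y - s) by lra.
  move=> /(_ isT h1 h2); rewrite addrCA subrr addr0 pmulr_rgt0 ?invr_gt0 ?subr_gt0 //.
  move: Q => [Q1 _]; lra.
have := sup_upper_bound hS Sx; rewrite -/s; lra.
Qed.

Lemma card_lt_ord (N k : nat) : (k <= N)%N -> #|[set i : 'I_N | (i < k)%N]%SET| = k.
Proof.
move=> kN.
have -> : [set i : 'I_N | (i < k)%N]%SET = [set widen_ord kN i | i : 'I_k]%SET.
  apply/setP => i; rewrite finset.in_set; apply/idP/imsetP.
    by move=> ik; exists (Ordinal ik) => //; apply/val_inj.
  by case=> j _ ->; rewrite /= ltn_ord.
rewrite card_imset ?card_ord //; by move=> a c /(congr1 val) /= ac; apply/val_inj.
Qed.

Lemma sorted_cnt (R : realType) (N : nat) (b : 'I_N -> R) (m : {perm 'I_N}) (k : 'I_N) (x : R) :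
  (forall i j : 'I_N, (i < j)%N -> b (m i) < b (m j)) ->
  (x <= b (m k)) = (#|[set n | (b n < x)%R]%SET| <= k)%N.
Proof.
move=> Hs.
have mono (i j : 'I_N) : (i <= j)%N -> b (m i) <= b (m j).
  rewrite leq_eqVlt => /orP [/eqP ij|ij]; last exact/ltW/Hs.
  by have -> : i = j by apply/val_inj.
apply/idP/idP => H.
  have sub : [set n | (b n < x)%R]%SET \subset [set m i | i in [set i : 'I_N | (i < k)%N]%SET]%SET.
    apply/fintype.subsetP => n; rewrite finset.in_set => bn.
    apply/imsetP; exists ((m^-1)%g n); last by rewrite permKV.
    rewrite finset.in_set ltnNge; apply/negP => kn.
    have := mono _ _ kn; rewrite permKV; lra.
  apply: leq_trans (subset_leq_card sub) _.
  by rewrite card_imset ?card_lt_ord //; [exact: ltnW | exact: perm_inj].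
rewrite leNgt; apply/negP => bx; move: H; apply/negP; rewrite -ltnNge.
have sub : [set m i | i in [set i : 'I_N | (i < k.+1)%N]%SET]%SET \subset [set n | (b n < x)%R]%SET.
  apply/fintype.subsetP => n /imsetP [i]; rewrite finset.in_set => ik ->.
  rewrite finset.in_set; exact: le_lt_trans (mono _ _ ik) bx.
apply: leq_trans _ (subset_leq_card sub).
by rewrite card_imset ?card_lt_ord //; exact: perm_inj.
Qed.

Lemma sort_perm (R : realType) (N : nat) (b : 'I_N -> R) :
  (forall n n' : 'I_N, n != n' -> b n != b n') ->
  exists m : {perm 'I_N}, forall i j : 'I_N, (i < j)%N -> b (m i) < b (m j).
Proof.
move=> Hd.
pose r (n : 'I_N) := #|[set n' | (b n' < b n)%R]%SET|.
have rlt n : (r n < N)%N.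
  rewrite -[X in (_ < X)%N]card_ord; apply: proper_card; apply/fintype.properP; split.
    exact: subset_predT.
  by exists n => //; rewrite finset.in_set ltxx.
have rmono n n' : b n <= b n' -> (r n <= r n')%N.
  move=> h; apply: subset_leq_card; apply/fintype.subsetP => x; rewrite !finset.in_set => hx.
  exact: lt_le_trans h.
have rsmono n n' : b n < b n' -> (r n < r n')%N.
  move=> h; apply: proper_card; apply/fintype.properP; split.
    apply/fintype.subsetP => x; rewrite !finset.in_set => hx; exact: lt_trans h.
  by exists n; rewrite !finset.in_set ?ltxx.
pose rk (n : 'I_N) : 'I_N := Ordinal (rlt n).
have rk_inj : injective rk.
  move=> n n' /(congr1 val) /= e; apply/eqP; apply/negP => /negP nn.
  have := Hd _ _ nn; case: (ltgtP (b n) (b n')) => // h _.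
    by have := rsmono _ _ h; rewrite e ltnn.
  by have := rsmono _ _ h; rewrite e ltnn.
exists ((perm rk_inj)^-1)%g => i j ij.
rewrite ltNge; apply/negP => /rmono.
have ri : forall x, r (((perm rk_inj)^-1)%g x) = x.
  by move=> x; have := permKV (perm rk_inj) x; rewrite permE => /(congr1 val).
by rewrite !ri leqNgt ij.
Qed.

Local Open Scope ereal_scope.

Lemma perm_prod_rule d (T : measurableType d) (R : realType) (P : probability T R)
  (I : finType) (W : I -> T -> R) :
  (forall E : I -> set R, (forall i, measurable (E i)) ->
     P (\bigcap_(i in [set: I]) (W i @^-1` E i)) = \prod_(i : I) P (W i @^-1` E i)) ->
  (forall i j (B : set R), measurable B -> P (W i @^-1` B) = P (W j @^-1` B)) ->
  forall (s : {perm I}) (E : I -> set R), (forall i, measurable (E i)) ->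
  P [set w | forall i, E i (W (s i) w)] = \prod_(i : I) P (W i @^-1` E i).
Proof.
move=> Hprod Hid s E mE.
have -> : [set w | forall i, E i (W (s i) w)] =
    \bigcap_(i in [set: I]) (W i @^-1` E ((s^-1)%g i)).
  apply/seteqP; split => w /=.
    by move=> H i _; have := H ((s^-1)%g i); rewrite permKV.
  by move=> H i; have := H (s i) Logic.I; rewrite /= permK.
rewrite Hprod; last by move=> i; exact: mE.
rewrite (reindex_inj (@perm_inj _ s)) /=.
apply: eq_bigr => i _; rewrite permK; exact: Hid.
Qed.

Definition Phi (R : realType) (T : Type) (I : finType) (W : I -> T -> R) (s : {perm I}) (w : T)
  : #|I|.-tuple R := [tuple W (s (enum_val j)) w | j < #|I|].

Lemma measurable_Phi d (T : measurableType d) (R : realType) (I : finType) (W : I -> T -> R) s :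
  (forall i, measurable_fun setT (W i)) -> measurable_fun setT (Phi W s).
Proof.
move=> mW; apply/measurable_fun_tnthP => j.
rewrite /comp /Phi /=.
under eq_fun do rewrite tnth_mktuple.
exact: mW.
Qed.

Definition rect (R : realType) (K : nat) (E : 'I_K -> set R) : set (K.-tuple R) :=
  [set v | forall j, E j (tnth v j)].

Lemma rect_measurable (R : realType) (K : nat) (E : 'I_K -> set R) :
  (forall j, measurable (E j)) -> measurable (rect E).
Proof.
move=> mE.
have -> : rect E = \big[setI/setT]_(j <- index_enum 'I_K) ((fun v : K.-tuple R => tnth v j) @^-1` E j).
  rewrite -bigcap_seq; apply/seteqP; split => v /=.
    by move=> H j _; exact: H.
  by move=> H j; apply: H => /=; rewrite mem_index_enum.
apply: bigsetI_measurable => j _.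
by rewrite -[X in measurable X]setTI; apply: measurable_tnth.
Qed.

Definition rects (R : realType) (K : nat) : set (set (K.-tuple R)) :=
  [set X | exists E : 'I_K -> set R, (forall j, measurable (E j)) /\ X = rect E].

Lemma rects_gen (R : realType) (K : nat) (A : set (K.-tuple R)) :
  measurable A -> <<s @rects R K >> A.
Proof.
move=> mA; apply: (smallest_sub (@smallest_sigma_algebra _ _ _) _ mA).
move=> B; rewrite -bigcup_seq => -[i _ [C mC <-]].
apply: sub_sigma_algebra.
exists (fun j => if j == i then C else setT); split.
  by move=> j; case: (j == i).
apply/seteqP; split => v /=.
  by move=> [_ Cv] j; case: eqP => [->|].
by move=> H; split => //; have := H i; rewrite eqxx.
Qed.

Lemma exch d (T : measurableType d) (R : realType) (P : probability T R)
  (I : finType) (W : I -> T -> R) :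
  (forall i, measurable_fun setT (W i)) ->
  (forall E : I -> set R, (forall i, measurable (E i)) ->
     P (\bigcap_(i in [set: I]) (W i @^-1` E i)) = \prod_(i : I) P (W i @^-1` E i)) ->
  (forall i j (B : set R), measurable B -> P (W i @^-1` B) = P (W j @^-1` B)) ->
  forall (s1 s2 : {perm I}) (A : set (#|I|.-tuple R)), measurable A ->
  P (Phi W s1 @^-1` A) = P (Phi W s2 @^-1` A).
Proof.
move=> mW Hprod Hid s1 s2 A mA.
have rectE s E : (forall j, measurable (E j)) ->
    P (Phi W s @^-1` rect E) = \prod_(i : I) P (W i @^-1` E (enum_rank i)).
  move=> mE; rewrite -(perm_prod_rule Hprod Hid s); last by move=> i; exact: mE.
  congr (P _); apply/seteqP; split => w /=.
    by move=> H i; have := H (enum_rank i); rewrite /Phi tnth_mktuple enum_rankK.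
  by move=> H j; rewrite /Phi tnth_mktuple; have := H (enum_val j); rewrite enum_valK.
pose F1 : {mfun T >-> #|I|.-tuple R} :=
  HB.pack (Phi W s1) (isMeasurableFun.Build _ _ _ _ (Phi W s1) (measurable_Phi s1 mW)).
pose F2 : {mfun T >-> #|I|.-tuple R} :=
  HB.pack (Phi W s2) (isMeasurableFun.Build _ _ _ _ (Phi W s2) (measurable_Phi s2 mW)).
have := @g_sigma_algebra_measure_unique _ R _ (@rects R #|I|) _ (fun _ => setT) _ _
  (distribution P F1) (distribution P F2).
apply.
- by move=> X [E [mE ->]]; exact: rect_measurable.
- by move=> _; exists (fun _ => setT); split => //; apply/seteqP; split.
- by rewrite bigcup_const.
- move=> X Y [E [mE ->]] [E' [mE' ->]]; exists (fun j => E j `&` E' j); split.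
    by move=> j; apply: measurableI.
  by apply/seteqP; split => v /=; [move=> [H1 H2] j; split|move=> H; split => j; case: (H j)].
- move=> X [E [mE ->]].
  change (P (Phi W s1 @^-1` rect E) = P (Phi W s2 @^-1` rect E)).
  by rewrite (rectE _ _ mE) (rectE _ _ mE).
- move=> _; change (P (Phi W s1 @^-1` setT) < +oo); rewrite preimage_setT probability_setT; exact: ltry.
- exact: rects_gen.
Qed.

Lemma cnt_measurable (R : realType) (K k : nat) (j : 'I_K) :
  measurable [set v : K.-tuple R | (#|[set i | (tnth v i < tnth v j)%R]%SET| <= k)%N].
Proof.
have mb i : measurable [set v : K.-tuple R | (tnth v i < tnth v j)%R].
  have := @measurable_realfun.measurable_fun_ltr _ _ R setT _ _ (measurable_tnth i) (measurable_tnth j) measurableT [set true].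
  by rewrite setTI; apply.
pose c (v : K.-tuple R) : R := (\sum_(i <- index_enum 'I_K) \1_[set v : K.-tuple R | (tnth v i < tnth v j)%R] v)%R.
have mc : measurable_fun setT c.
  by apply: measurable_sum => i; apply: measurable_realfun.measurable_indic.
have cE v : c v = (#|[set i | (tnth v i < tnth v j)%R]%SET|)%:R.
  rewrite /c -sumr_const.
  rewrite [RHS]big_mkcond /=; apply: eq_bigr => i _.
  rewrite indicE finset.in_set; case: ifP => h.
    by rewrite mem_set.
  by rewrite memNset //= h.
have := mc measurableT _ (measurable_itv `]-oo, k%:R]).
rewrite setTI; congr measurable; apply/seteqP; split => v /=; rewrite cE in_itv /= ler_nat //.
Qed.
Lemma count_lemma (R : realType) (I : finType) (v : I -> R) (k : nat) :
  (k < #|I|)%N -> (k < #|[set j | (#|[set i | (v i < v j)%R]%SET| <= k)%N]%SET|)%N.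
Proof.
move=> kI; set J := [set j | _]%SET; rewrite ltnNge; apply/negP => JK.
have : (0 < #|~: J|)%N by have := cardsC J; lia.
case/card_gt0P => j0 j0J.
case: (arg_minnP (fun j => #|[set i | (v i < v j)%R]%SET|) j0J) => js jsJ jsmin.
have : js \in ~: J by [].
rewrite finset.in_setC /J finset.in_set => /negP; apply.
apply: leq_trans JK; apply: subset_leq_card; apply/fintype.subsetP => i; rewrite finset.in_set => vi.
apply/negPn/negP => iJ.
have : i \in ~: J by rewrite finset.in_setC iJ.
move=> /jsmin; apply/negP; rewrite -ltnNge.
apply: proper_card; apply/fintype.properP; split.
  apply/fintype.subsetP => x; rewrite !finset.in_set => h; exact: lt_trans vi.
by exists i; rewrite !finset.in_set ?ltxx.
Qed.

Lemma conformal d (T : measurableType d) (R : realType) (P : probability T R)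
  (I : finType) (W : I -> T -> R) (k : nat) :
  (forall i, measurable_fun setT (W i)) ->
  (forall E : I -> set R, (forall i, measurable (E i)) ->
     P (\bigcap_(i in [set: I]) (W i @^-1` E i)) = \prod_(i : I) P (W i @^-1` E i)) ->
  (forall i j (B : set R), measurable B -> P (W i @^-1` B) = P (W j @^-1` B)) ->
  (k < #|I|)%N ->
  forall o0 : I, measurable [set w | (#|[set x | (W x w < W o0 w)%R]%SET| <= k)%N] /\
    (((k.+1)%:R / #|I|%:R)%:E <= P [set w | (#|[set x | (W x w < W o0 w)%R]%SET| <= k)%N]).
Proof.
move=> mW Hprod Hid kI o0.
pose Ev o := [set w | (#|[set x | (W x w < W o w)%R]%SET| <= k)%N].
pose Av o := [set v : #|I|.-tuple R | (#|[set i | (tnth v i < tnth v (enum_rank o))%R]%SET| <= k)%N].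
have EvE s o : Phi W s @^-1` Av o = Ev (s o).
  have cardE w : #|[set i | (tnth (Phi W s w) i < tnth (Phi W s w) (enum_rank o))%R]%SET| =
      #|[set x | (W x w < W (s o) w)%R]%SET|.
    have -> : [set x | (W x w < W (s o) w)%R]%SET = [set (s \o enum_val) i | i in
        [set i | (tnth (Phi W s w) i < tnth (Phi W s w) (enum_rank o))%R]%SET]%SET.
      apply/setP => x; rewrite finset.in_set; apply/idP/imsetP.
      + move=> h; exists (enum_rank ((s^-1)%g x)); last by rewrite /= enum_rankK permKV.
        by rewrite finset.in_set /Phi !tnth_mktuple !enum_rankK permKV.
      + by case=> i; rewrite finset.in_set /Phi !tnth_mktuple enum_rankK => h ->.
    rewrite card_imset // => a c /= /perm_inj; exact: enum_val_inj.
  by apply/seteqP; split => w /=; rewrite /Av /= cardE.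
have mEv o : measurable (Ev o).
  rewrite -(perm1 o) -EvE -[X in measurable X]setTI.
  by apply: measurable_Phi => //; apply: cnt_measurable.
have PEv o : P (Ev o) = P (Ev o0).
  rewrite -{1}(perm1 o) -EvE (exch mW Hprod Hid 1%g (tperm o o0)) ?EvE ?tpermL //.
  exact: cnt_measurable.
split; first exact: mEv.
have fin o : P (Ev o) \is a fin_num by apply: fin_num_measure.
have key : (k.+1%:R)%:E <= \sum_(o <- index_enum I) P (Ev o).
  have -> : \sum_(o <- index_enum I) P (Ev o) =
      \int[P]_(w in setT) (\sum_(o <- index_enum I) (\1_(Ev o) w)%:E).
    rewrite ge0_integral_sum //.
    all: try (by move=> o w _; rewrite lee_fin).
    all: try (by move=> o; apply/measurable_realfun.measurable_EFinP; apply: measurable_realfun.measurable_indic).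
    by apply: eq_bigr => o _; rewrite integral_indic // setIT.
  have -> : (k.+1%:R)%:E = \int[P]_(w in setT) (cst (k.+1%:R)%:E w : \bar R).
    rewrite integral_cst //; set x := (X in (_ * X)%E); have -> : x = 1%E by exact: probability_setT.
    by rewrite mule1.
  apply: ge0_le_integral => //.
  - by move=> w _; rewrite lee_fin.
  - apply: emeasurable_sum => o.
    by apply/measurable_realfun.measurable_EFinP; apply: measurable_realfun.measurable_indic.
  move=> w _; rewrite sumEFin lee_fin /=.
  have -> : (\sum_(o <- index_enum I) (\1_(Ev o) w : R) = 
      (#|[set j | (#|[set i | (W i w < W j w)%R]%SET| <= k)%N]%SET|)%:R)%R.
    rewrite -sumr_const [RHS]big_mkcond /=; apply: eq_bigr => o _.
    rewrite indicE finset.in_set; case: ifP => h; first by rewrite mem_set.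
    by rewrite memNset // /Ev /= h.
  rewrite ler_nat; exact: count_lemma.
rewrite (eq_bigr (fun _ => P (Ev o0))) in key; last by move=> o _; exact: PEv.
rewrite -(fineK (fin o0)) in key *.
rewrite sumEFin lee_fin in key; rewrite lee_fin.
move: key; rewrite sumr_const => key.
have {}key : (k.+1%:R <= fine (P (Ev o0)) *+ #|I|)%R by [].
have I0 : (0 < #|I|%:R :> R)%R by rewrite ltr0n; lia.
by rewrite ler_pdivrMr // mulr_natr.
Qed.

Local Close Scope ereal_scope.

Lemma incr_le (R : realType) (g : R -> R) : pos_deriv_on_Rplus g ->
  forall x y, 0 <= x -> 0 <= y -> (g x <= g y) = (x <= y).
Proof.
move=> Hg x y x0 y0; case: (ltgtP x y) => [xy|yx|<-].
- by apply/idP; apply/ltW/strict_incr.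
- by apply/negbTE; rewrite -ltNge; apply: strict_incr.
- by rewrite lexx.
Qed.

Theorem theorem1 (R : realType) (d N : nat) (hd : (0 < d)%N) (hN : (0 < N)%N)
  (dT : measure_display) (T : measurableType dT) (P : probability T R)
  (X : 'I_N -> T -> d.-tuple R) (Y : 'I_N -> T -> R)
  (Xt : T -> d.-tuple R) (Yt : T -> R)
  (f : d.-tuple R -> R) (phi : d.-tuple R -> R -> R) :
  iid_family P (fun o : option 'I_N =>
    match o with Some n => fun w => (X n w, Y n w)
               | None => fun w => (Xt w, Yt w) end) ->
  measurable_fun setT f ->
  measurable_fun setT (fun p : d.-tuple R * R => phi p.1 p.2) ->
  (forall x, pos_deriv_on_Rplus (phi x)) ->
  (forall x x', phi x @` [set a : R | 0 <= a] = phi x' @` [set a : R | 0 <= a]) ->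
  let A := fun (n : 'I_N) (w : T) => (f (X n w) - Y n w) ^+ 2 in
  let B := fun (n : 'I_N) (w : T) => phi (X n w) (A n w) in
  (forall w (n n' : 'I_N), n != n' -> B n w != B n' w) ->
  (forall w, exists m : {perm 'I_N},
     forall i j : 'I_N, (i < j)%N -> B (m i) w < B (m j) w) /\
  (forall alpha : R, (N.+1%:R)^-1 <= alpha -> alpha < 1 ->
     (exists k : 'I_N, Num.ceil (N.+1%:R * (1 - alpha)) = (k.+1)%:Z) /\
     (forall k : 'I_N, Num.ceil (N.+1%:R * (1 - alpha)) = (k.+1)%:Z ->
      forall m : T -> {perm 'I_N},
        (forall w (i j : 'I_N), (i < j)%N -> B (m w i) w < B (m w j) w) ->
        let Delta := fun w : T =>
          Num.sqrt (inv_Rplus (phi (Xt w)) (B (m w k) w)) in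
        (P [set w | Yt w \in `[(f (Xt w) - Delta w)%R, (f (Xt w) + Delta w)%R]]
          >= (1 - alpha)%:E)%E)).

Proof.
move=> [mZ Hprod Hid] mf mphi Hder Hrange A B Hdist.
split.
  by move=> w; exact: (@sort_perm R N (fun n => B n w) (fun n n' nn' => Hdist w n n' nn')).
move=> alpha a1 a2.
set x := N.+1%:R * (1 - alpha).
have N0 : (0 < N.+1%:R :> R) by rewrite ltr0n.
have x0 : 0 < x by rewrite /x mulr_gt0 // subr_gt0.
have xN : x <= N%:R.
  have h : 1 <= N.+1%:R * alpha.
    by move: a1; rewrite -(ler_pM2l N0) mulfV // gt_eqF.
  by rewrite /x mulrBr mulr1 -natr1; lra.
have c0 : (0 < Num.ceil x)%R by rewrite ceil_gt0.
have cN : (Num.ceil x <= N%:Z)%R by rewrite ceil_le_int.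
have [n cn] : exists n : nat, Num.ceil x = n.+1%:Z.
  by move: c0; case: (Num.ceil x) => [[|n]|n] //= _; exists n.
have nN : (n < N)%N by move: cN; rewrite cn lez_nat.
split; first (exists (Ordinal nN); exact: cn).
move=> k hk m msort; cbv zeta.
pose g (p : d.-tuple R * R) : R := phi p.1 ((f p.1 - p.2) ^+ 2).
have mg : measurable_fun setT g.
  have -> : g = (fun q : d.-tuple R * R => phi q.1 q.2) \o
      (fun p : d.-tuple R * R => (p.1, (f p.1 - p.2) ^+ 2)) by [].
  apply: measurableT_comp mphi _; apply: measurable_fun_pair => //.
  apply: measurable_realfun.measurable_funX.
  apply: measurable_realfun.measurable_funB => //.
  exact: measurableT_comp mf measurable_fst.
pose Z := (fun o : option 'I_N =>
    match o with Some n => fun w => (X n w, Y n w)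
               | None => fun w => (Xt w, Yt w) end).
pose W (o : option 'I_N) (w : T) : R := g (Z o w).
have mgE (E : set R) : measurable E -> measurable (g @^-1` E).
  by move=> mE; have := mg measurableT _ mE; rewrite setTI.
have mW o : measurable_fun setT (W o) by apply: measurableT_comp mg (mZ o).
have HprodW (E : option 'I_N -> set R) : (forall i, measurable (E i)) ->
    P (\bigcap_(i in [set: option 'I_N]) (W i @^-1` E i)) =
    (\prod_(i : option 'I_N) P (W i @^-1` E i))%E.
  by move=> mE; exact: (Hprod (fun i => g @^-1` E i) (fun i => mgE _ (mE i))).
have HidW i j (E : set R) : measurable E -> P (W i @^-1` E) = P (W j @^-1` E).
  by move=> mE; exact: (Hid i j (g @^-1` E) (mgE _ mE)).
have cardI : #|{: option 'I_N}| = N.+1 by rewrite card_option card_ord.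
have kI : (k < #|{: option 'I_N}|)%N by rewrite cardI ltnS ltnW.
have [mEv PEv] := conformal mW HprodW HidW kI None.
have key w : (Yt w \in `[(f (Xt w) - Num.sqrt (inv_Rplus (phi (Xt w)) (B (m w k) w)))%R,
      (f (Xt w) + Num.sqrt (inv_Rplus (phi (Xt w)) (B (m w k) w)))%R]) =
    (#|[set x | (W x w < W None w)%R]%SET| <= k)%N.
  set b := B (m w k) w.
  have [a [a0 ab]] : exists a, 0 <= a /\ phi (Xt w) a = b.
    have : (phi (X (m w k) w) @` [set a | 0 <= a]) b.
      by exists (A (m w k) w) => //; rewrite /A /= sqr_ge0.
    by rewrite (Hrange _ (Xt w)) => -[a a0 ab]; exists a.
  have [ha0 hab] := @xgetPex _ 0 [set a : R | 0 <= a /\ phi (Xt w) a = b]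
    (ex_intro _ a (conj a0 ab)).
  rewrite /inv_Rplus.
  set as_ := xget 0 _ in ha0 hab *.
  rewrite in_itv /= -ler_distl -sqrtr_sqr ler_sqrt //.
  have -> : (Yt w - f (Xt w)) ^+ 2 = (f (Xt w) - Yt w) ^+ 2 by rewrite -sqrrN opprB.
  rewrite -(incr_le (Hder (Xt w))) ?sqr_ge0 // hab.
  have -> : phi (Xt w) ((f (Xt w) - Yt w) ^+ 2) = W None w by [].
  rewrite (@sorted_cnt R N (fun n => B n w) (m w) k (W None w) (msort w)).
  have -> : [set x | (W x w < W None w)%R]%SET = [set Some n | n in [set n | (B n w < W None w)%R]%SET]%SET.
    apply/setP => -[j|]; rewrite finset.in_set.
    - apply/idP/imsetP => [h|[n' + [->]]]; last by rewrite finset.in_set.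
      by exists j => //; rewrite finset.in_set.
    - rewrite ltxx; apply/esym/negbTE/imsetP => -[n' _] //.
  by rewrite card_imset //; move=> ? ? [].
have -> : [set w | Yt w \in `[(f (Xt w) - Num.sqrt (inv_Rplus (phi (Xt w)) (B (m w k) w)))%R,
      (f (Xt w) + Num.sqrt (inv_Rplus (phi (Xt w)) (B (m w k) w)))%R]] =
    [set w | (#|[set x | (W x w < W None w)%R]%SET| <= k)%N].
  by apply/seteqP; split => w /=; rewrite key.
apply: le_trans PEv; rewrite lee_fin cardI.
have := ceil_ge x; rewrite hk => hx.
rewrite ler_pdivlMr // mulrC; apply: le_trans hx _; first [by rewrite pmulrn | by rewrite -pmulrn | by []].
Qed.
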